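(* The Kaplan–Meier policy $\pi^{\mathrm{KM}}_{\bm n}$ is piecewise-separable with respect to $\bm x$, with $\mathcal X_0=\emptyset$ and $\mathcal X_k=\{x_1,\dots,x_k\}$ for every $k\in\{1,\dots,K\}$. That is, for each $k\in\{0,\dots,K\}$ there is a continuous (in fact polynomial) function $P_k:[0,1]^k\times[0,1]\to[0,1]$ such that for every $F\in\Delta([0,1])$ and every $z\in[x_k,x_{k+1})$, $$\mathbb P_{\bm D\sim F^n}\big(\pi^{\mathrm{KM}}_{\bm n}(\bm x,\bm I)\le z\big)=P_k\big(F(x_1),\dots,F(x_k),F(z)\big).$$
   Context: Setup: $c_u,c_o>0$, $q=c_u/(c_u+c_o)$. $K\ge1$, $0\le x_1\le\cdots\le x_K\le1$, $x_0:=0$, $x_{K+1}:=1$, $\bm n\in\mathbb N^K$, $n=\sum_k n_k$. $\Delta([0,1])$ = probability distributions on $[0,1]$ identified with right-continuous CDFs. Demands $D^{(k)}_i$ ($k\in[K]$, $i\in[n_k]$) i.i.d. from $F$ ($\bm D\sim F^n$); sales $S^{(k)}_i=\min\{D^{(k)}_i,x_k\}$; indicators $\delta^{(k)}_i=\mathbb 1(D^{(k)}_i\le x_k)$; $\bm I$ the collection of $(S^{(k)}_i,\delta^{(k)}_i)$. Kaplan–Meier policy: let $Y_1\le\cdots\le Y_n$ be the sorted sales values, ties broken by placing uncensored observations ($\delta=1$) before censored ones, and let $\zeta_i=1$ if $Y_i$ is an uncensored observation and $0$ otherwise. Define $\hat F_{\mathrm{KM}}(z)=1-\prod_{i:Y_i\le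 z}\big(\frac{n-i}{n-i+1}\big)^{\zeta_i}$ for $z<1$ and $\hat F_{\mathrm{KM}}(1)=1$, and $\pi^{\mathrm{KM}}_{\bm n}(\bm x,\bm I)=\inf\{u\in[0,1]:\hat F_{\mathrm{KM}}(u)\ge q\}$. Piecewise-separable: a policy $\pi_{\bm n}$ is piecewise-separable w.r.t. $\bm x$ if for each $k\in\{0,\dots,K\}$ there are $\mathcal X_k\subseteq\{x_0,\dots,x_K\}$ and a continuous $P_k:[0,1]^{|\mathcal X_k|}\times[0,1]\to[0,1]$ with $\mathbb P_{\bm D\sim F^n}(\pi_{\bm n}(\bm x,\bm I)\le z)=P_k(F(\mathcal X_k),F(z))$ for all $F\in\Delta([0,1])$ and all $z\in[x_k,x_{k+1})$, where $F(\mathcal X_k)$ is the vector of $F(x_j)$, $x_j\in\mathcal X_k$. *)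

(* Defs.v *)
From HB Require Import structures.
From mathcomp Require Import all_boot all_order all_algebra.
From mathcomp Require Import all_classical all_reals all_analysis.
Set Implicit Arguments. Unset Strict Implicit. Unset Printing Implicit Defensive.
Import Order.TTheory GRing.Theory Num.Theory.
Import numFieldNormedType.Exports.
Local Open Scope classical_set_scope.
Local Open Scope ring_scope.

Section Defs.
Variable R : realType.

(* x_j for j = 0..K+1, with the conventions x_0 := 0, x_{K+1} := 1;
   the data x : nat -> R is only read at indices 1..K. *)
Definition xb (K : nat) (x : nat -> R) (j : nat) : R :=
  if j == 0%N then 0 else if (j <= K)%N then x j else 1.

(* thresholds of the n = \sum_k n_k observations, listed group by group:
   n_1 copies of x_1, then n_2 copies of x_2, ..., n_K copies of x_K *)
Definition thresholds (K : nat) (x : nat -> R) (ns : nat -> nat) : seq R :=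
  flatten [seq nseq (ns k) (x k) | k <- iota 1 K].

Definition sales_data (thr : seq R) (D : seq R) : seq (R * bool) :=
  [seq (Num.min d.1 d.2, d.1 <= d.2) | d <- zip D thr].

(* sort by sales value, ties broken with uncensored (delta = true) first *)
Definition km_order (a b : R * bool) : bool :=
  (a.1 < b.1) || ((a.1 == b.1) && (b.2 ==> a.2)).

Definition km_sorted (obs : seq (R * bool)) : seq (R * bool) :=
  sort km_order obs.

(* Kaplan--Meier CDF estimate; index j (0-based) corresponds to i = j+1 *)
Definition KM_cdf (obs : seq (R * bool)) (z : R) : R :=
  let ys := km_sorted obs in
  let n := size ys in
  if z < 1 then
    1 - \prod_(j < n | ((nth (0, false) ys j).1 <= z) && (nth (0, false) ys j).2)
          ((n - j.+1)%:R / (n - j)%:R)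
  else 1.

Definition KM_policy (q : R) (obs : seq (R * bool)) : R :=
  inf [set u : R | 0 <= u <= 1 /\ q <= KM_cdf obs u].

Definition cdf_of (mu : probability R R) (z : R) : R := fine (mu [set` `]-oo, z]]).

(* iterated integral w.r.t. the n-fold product mu^n of a function of
   the sample (D_1, ..., D_n) (written as a list) *)
Fixpoint iint (mu : probability R R) (m : nat) (g : seq R -> \bar R) : \bar R :=
  match m with
  | 0%N => g [::]
  | m.+1 => (\int[mu]_d iint mu m (fun s => g (d :: s)))%E
  end.

Definition prod_prob (mu : probability R R) (m : nat) (A : set (seq R)) : \bar R :=
  iint mu m (fun s => ((\1_A s : R))%:E).

End Defs.

(* Main.v *)
Require Import Defs.
From HB Require Import structures.
From mathcomp Require Import all_boot all_order all_algebra.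
From mathcomp Require Import all_classical all_reals all_analysis.
Import Order.TTheory GRing.Theory Num.Theory.
Import numFieldNormedType.Exports.
Local Open Scope classical_set_scope.
Local Open Scope ring_scope.
Set Implicit Arguments. Unset Strict Implicit. Unset Printing Implicit Defensive.
From mathcomp Require Import zify ring lra.
Section B.
Variable R : realType.
Implicit Types obs : seq (R * bool).

Definition KMprod obs (z : R) : R :=
  let ys := km_sorted obs in
  let n := size ys in
  \prod_(j < n | ((nth (0, false) ys j).1 <= z) && (nth (0, false) ys j).2)
          ((n - j.+1)%:R / (n - j)%:R).

Lemma KM_cdfE obs z : z < 1 -> KM_cdf obs z = 1 - KMprod obs z.
Proof. by move=> z1; rewrite /KM_cdf z1. Qed.

Lemma km_refl : reflexive (@km_order R).
Proof. by move=> a; rewrite /km_order eqxx implybb orbT. Qed.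

Lemma km_total : total (@km_order R).
Proof.
move=> [a1 a2] [b1 b2]; rewrite /km_order /=.
case: (ltgtP a1 b1) => [//|//|e]; rewrite ?e ?eqxx ?ltxx /=; by case: a2; case: b2.
Qed.

Lemma km_trans : transitive (@km_order R).
Proof.
move=> [b1 b2] [a1 a2] [c1 c2]; rewrite /km_order /=.
case/orP=> [ab|/andP[/eqP e1 h1]]; case/orP=> [bc|/andP[/eqP e2 h2]].
- by rewrite (lt_trans ab bc).
- by rewrite -e2 ab.
- by rewrite e1 bc.
- by rewrite e1 e2 eqxx ltxx /=; move: h1 h2; case: a2; case: c2; case: b2.
Qed.

Lemma km_anti : antisymmetric (@km_order R).
Proof.
move=> [a1 a2] [b1 b2]; rewrite /km_order /=.
case: (ltgtP a1 b1) => [//|//|e]; rewrite ?e ?eqxx /=.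
by case: a2; case: b2 => // _ _.
Qed.

Lemma km_sorted_map (f : R * bool -> R * bool) obs :
  {in obs &, forall a b, km_order a b -> km_order (f a) (f b)} ->
  km_sorted (map f obs) = map f (km_sorted obs).
Proof.
move=> mono; rewrite /km_sorted.
apply: (sorted_eq km_trans km_anti).
- exact: (sort_sorted km_total).
- rewrite sorted_map.
  have H1 : all [pred x | x \in obs] (sort (@km_order R) obs).
    by apply/allP=> a; rewrite mem_sort.
  have H2 : {in [pred x | x \in obs] &, subrel (@km_order R) (relpre f (@km_order R))}.
    by move=> a b ha hb; apply: mono.
  exact: (sub_in_sorted H2 H1 (sort_sorted km_total obs)).
- by rewrite perm_sort perm_sym; apply: perm_map; rewrite perm_sort.
Qed.

Lemma KMprod_map (f : R * bool -> R * bool) obs z z' :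
  {in obs &, forall a b, km_order a b -> km_order (f a) (f b)} ->
  {in obs, forall a, ((f a).1 <= z') && (f a).2 = (a.1 <= z) && a.2} ->
  KMprod (map f obs) z' = KMprod obs z.
Proof.
move=> mono cond; rewrite /KMprod km_sorted_map // size_map.
apply: eq_bigl => j.
rewrite (nth_map (0, false)) //; apply: cond.
by rewrite -(mem_sort (@km_order R)); apply: mem_nth.
Qed.

End B.
Section A.
Variable R : realType.
Implicit Types obs : seq (R * bool).

Lemma KMprod_ge0 obs z : 0 <= KMprod obs z.
Proof.
rewrite /KMprod; apply: prodr_ge0 => j _; apply: divr_ge0; exact: ler0n.
Qed.

Lemma KMprod_mono obs u u' : u <= u' -> KMprod obs u' <= KMprod obs u.
Proof.
move=> uu; rewrite /KMprod !(big_mkcond (fun j : 'I_ _ => _ && _)) /=.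
apply: ler_prod => j _.
set a := (_ / _).
have a01 : 0 <= a <= 1.
  rewrite /a divr_ge0 //= ler_pdivrMr ?mul1r ?ler_nat ?ltr0n; first by lia.
  by rewrite subn_gt0.
set Y := nth _ _ _.
case/andP: a01 => a0 a1.
case: ifP => [_|h].
  by rewrite a0 /=; case: ifP => _; rewrite ?lexx.
case: ifP => [/andP[h1 h2]|_]; last by rewrite ler01 lexx.
by move: h; rewrite (le_trans h1 uu) h2.
Qed.

Lemma gap (s : seq R) (z b : R) : z < b ->
  exists m, [/\ z < m, m <= b & forall y, y \in s -> z < y -> m <= y].
Proof.
move=> zb; elim: s => [|y s [m [zm mb H]]].
  by exists b; split => // y.
case: (ltP z y) => zy.
  exists (Num.min m y); split.
  - by rewrite lt_min zm zy.
  - by rewrite ge_min mb.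
  - move=> y'; rewrite inE => /orP[/eqP ->|ys] zy'.
      by rewrite ge_min lexx orbT.
    by rewrite ge_min (H _ ys zy').
exists m; split => // y'; rewrite inE => /orP[/eqP ->|ys] zy'.
  by move: (lt_le_trans zy' zy); rewrite ltxx.
exact: H.
Qed.

Lemma KMprod_gap obs z : z < 1 ->
  exists m, [/\ z < m, m <= 1 &
    forall u, z <= u -> u < m -> KMprod obs u = KMprod obs z].
Proof.
move=> z1; have [m [zm m1 H]] := gap (map fst (km_sorted obs)) z1.
exists m; split => // u zu um; rewrite /KMprod; apply: eq_bigl => j.
set Y := nth _ _ _.
have : (Y.1 <= u) = (Y.1 <= z).
  apply/idP/idP => [Yu|Yz]; last exact: le_trans Yz zu.
  rewrite leNgt; apply/negP => zY.
  have : m <= Y.1.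
    apply: H zY; apply/mapP; exists Y => //; exact: mem_nth.
  by move=> mY; move: (le_lt_trans Yu um); rewrite ltNge mY.
by move=> ->.
Qed.

Lemma KM_policy_le (q : R) obs z : q <= 1 -> 0 <= z -> z < 1 ->
  (KM_policy q obs <= z) = (q <= 1 - KMprod obs z).
Proof.
move=> q1 z0 z1.
set S := [set u : R | 0 <= u <= 1 /\ q <= KM_cdf obs u].
have hlb : has_lbound S by exists 0 => u [/andP[]].
have S1 : S 1 by split; rewrite ?ler01 ?lexx // /KM_cdf ltxx.
apply/idP/idP => [hle|hq]; last first.
  apply: (ge_inf hlb); split; first by rewrite z0 ltW.
  by rewrite KM_cdfE.
rewrite leNgt; apply/negP => hlt.
have [m [zm m1 H]] := KMprod_gap obs z1.
have : m <= KM_policy q obs.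
  apply: lb_le_inf; first by exists 1.
  move=> u [/andP[u0 u1'] qu]; rewrite leNgt; apply/negP => um.
  have u1 : u < 1 by exact: lt_le_trans um m1.
  move: qu; rewrite KM_cdfE // => qu.
  case: (leP z u) => zu.
    by move: qu; rewrite H // => qu; move: (le_lt_trans qu hlt); rewrite ltxx.
  have : 1 - KMprod obs u <= 1 - KMprod obs z.
    by rewrite lerD2l lerN2 KMprod_mono // ltW.
  by move=> h; move: (le_lt_trans (le_trans qu h) hlt); rewrite ltxx.
by move=> mK; move: (lt_le_trans zm (le_trans mK hle)); rewrite ltxx.
Qed.

End A.
Section D.
Variable R : realType.
Variable N : nat.

Fixpoint Ecell (pi : nat -> R) (m : nat) (Phi : seq nat -> R) : R :=
  match m with
  | 0%N => Phi [::]
  | m.+1 => \sum_(j < N) pi j * Ecell pi m (fun w => Phi (nat_of_ord j :: w))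
  end.

Lemma Ecell_ge0 (pi : nat -> R) m (Phi : seq nat -> R) : (forall j, 0 <= pi j) -> (forall w, 0 <= Phi w) ->
  0 <= Ecell pi m Phi.
Proof.
move=> hpi; elim: m Phi => [|m IH] Phi hPhi /=; first exact: hPhi.
apply: sumr_ge0 => j _; apply: mulr_ge0 => //; exact: IH.
Qed.

Lemma Ecell_le1 (pi : nat -> R) m (Phi : seq nat -> R) : (forall j, 0 <= pi j) -> \sum_(j < N) pi (nat_of_ord j) = 1 ->
  (forall w, 0 <= Phi w <= 1) -> Ecell pi m Phi <= 1.
Proof.
move=> hpi hs; elim: m Phi => [|m IH] Phi hPhi /=; first by case/andP: (hPhi [::]).
rewrite -[leRHS]hs; apply: ler_sum => j _.
rewrite -[leRHS]mulr1; apply: ler_wpM2l => //; exact: IH.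
Qed.

Lemma Ecell_ext (pi pi' : nat -> R) m (Phi : seq nat -> R) : (forall j, (j < N)%N -> pi j = pi' j) ->
  Ecell pi m Phi = Ecell pi' m Phi.
Proof.
move=> h; elim: m Phi => [|m IH] Phi //=.
by apply: eq_bigr => j _; rewrite h // IH.
Qed.

Variable mu : probability R R.
Variable c : R -> nat.
Hypothesis cN : forall d, (c d < N)%N.
Hypothesis cmeas : forall j, measurable [set d | c d = j].

Definition picell j : R := fine (mu [set d | c d = j]).

Lemma picell_ge0 j : 0 <= picell j.
Proof. exact/fine_ge0/measure_ge0. Qed.

Lemma integral_cells (H : nat -> R) : (forall j, 0 <= H j) ->
  (\int[mu]_d (H (c d))%:E = (\sum_(j < N) picell j * H j)%:E)%E.
Proof.
move=> H0.
have eq1 : forall d, (H (c d))%:E = (\sum_(j < N) ((H j)%:E * (\1_[set d | c d = j] d)%:E))%E.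
  move=> d; rewrite (bigD1 (Ordinal (cN d))) //= big1 ?adde0.
    by rewrite indicE mem_set //= mule1.
  move=> j /eqP hj; rewrite indicE memNset ?mule0 //= => e.
  by apply: hj; apply: val_inj => /=.
under eq_integral do rewrite eq1.
rewrite ge0_integral_sum //; last first.
- by move=> j d _; rewrite mule_ge0 // lee_fin.
- move=> j; apply/measurable_realfun.measurable_EFinP.
  apply: measurable_realfun.measurable_funM; first exact: measurable_cst.
  exact: measurable_realfun.measurable_indic.
rewrite -sumEFin; apply: eq_bigr => j _.
rewrite ge0_integralZl_EFin //; last first.
  by apply/measurable_realfun.measurable_EFinP; exact: measurable_realfun.measurable_indic.
rewrite integral_indic // setIT /picell EFinM fineK ?fin_num_measure // muleC. all: try done.
Qed.

Lemma iint_cells m (g : seq R -> \bar R) (Phi : seq nat -> R) :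
  (forall w, 0 <= Phi w) ->
  (forall s, size s = m -> g s = (Phi (map c s))%:E) ->
  iint mu m g = (Ecell picell m Phi)%:E.
Proof.
elim: m g Phi => [|m IH] g Phi hPhi hg /=; first by rewrite hg.
transitivity (\int[mu]_d (Ecell picell m (fun w => Phi (c d :: w)))%:E)%E.
  apply: eq_integral => d _; apply: IH => // s hs.
  by rewrite hg //= hs.
rewrite (@integral_cells (fun j => Ecell picell m (fun w => Phi (j :: w)))) //.
move=> j; apply: Ecell_ge0 => //; exact: picell_ge0.
Qed.

End D.
Section C.
Variables (R : realType) (K k : nat) (x : nat -> R) (z : R).
Hypothesis hk : (k <= K)%N.
Hypothesis hx1 : 0 <= x 1%N.
Hypothesis hmono : forall i j : nat, (1 <= i)%N -> (i <= j)%N -> (j <= K)%N -> x i <= x j.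
Hypothesis hxK : x K <= 1.
Hypothesis hz : xb K x k <= z < xb K x k.+1.

Definition pp (j : nat) : R := if (j < k)%N then x j.+1 else z.
Definition cc (d : R) : nat := (\sum_(i < k.+1) nat_of_bool (pp i < d)%R)%N.

Lemma xk_le_z : (1 <= k)%N -> x k <= z.
Proof.
move=> k1; case/andP: hz => h _; move: h; rewrite /xb.
by rewrite (negbTE (lt0n_neq0 k1)) hk.
Qed.

Lemma z_lt_x g : (k < g)%N -> (g <= K)%N -> z < x g.
Proof.
move=> kg gK; case/andP: hz => _ h; move: h; rewrite /xb /= (leq_trans kg gK).
move=> h; apply: (lt_le_trans h); apply: hmono => //.
Qed.

Lemma z_lt1 : z < 1.
Proof.
case/andP: hz => _ h; move: h; rewrite /xb /=.
case: ifP => // kK h; apply: (lt_le_trans h); apply: (le_trans _ hxK).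
by apply: hmono.
Qed.

Lemma z_ge0 : 0 <= z.
Proof.
case/andP: hz => h _; apply: le_trans h; rewrite /xb.
case: eqP => // /eqP k0; rewrite hk; apply: (le_trans hx1); apply: hmono => //.
by rewrite lt0n.
Qed.

Lemma pp_mono i j : (i <= j)%N -> pp i <= pp j.
Proof.
rewrite /pp => ij; case: ifP => ik; case: ifP => jk //.
- by apply: hmono => //; lia.
- apply: le_trans (xk_le_z _); last by lia.
  by apply: hmono => //; lia.
- by move: (leq_ltn_trans ij jk); rewrite ik.
Qed.

Lemma sum_lt (n j : nat) : \sum_(i < n) nat_of_bool (i < j)%N = minn j n.
Proof.
elim: n => [|n IH]; first by rewrite big_ord0 minn0.
rewrite big_ord_recr /= IH; case: (ltnP n j) => h /=; lia.
Qed.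

Lemma cc_le j d : (j <= k)%N -> (cc d <= j)%N = (d <= pp j).
Proof.
move=> jk; apply/idP/idP => [h|h].
  rewrite leNgt; apply/negP => pd.
  have : (j.+1 <= cc d)%N.
    have -> : j.+1 = minn j.+1 k.+1 by lia.
    rewrite -sum_lt /cc; apply: leq_sum => i _.
    case: (ltnP i j.+1) => //= ij.
    by rewrite (le_lt_trans (@pp_mono i j ij) pd).
  lia.
have -> : j = minn j k.+1 by lia.
rewrite -sum_lt /cc; apply: leq_sum => i _.
case: (ltP (pp i) d) => //= hi.
case: (ltnP i j) => // ji.
by move: (lt_le_trans hi (le_trans h (pp_mono ji))); rewrite ltxx.
Qed.

Lemma cc_lek1 d : (cc d <= k.+1)%N.
Proof.
rewrite -[X in (_ <= X)%N](minnn k.+1) -sum_lt; apply: leq_sum => i _.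
by rewrite ltn_ord; case: (_ < _).
Qed.

Lemma cc_mono d d' : d <= d' -> (cc d <= cc d')%N.
Proof.
move=> dd; apply: leq_sum => i _.
case: (ltP (pp i) d) => //= h.
by rewrite (lt_le_trans h dd).
Qed.

Lemma cc_lek d : (cc d <= k)%N = (d <= z).
Proof. by rewrite cc_le // /pp ltnn. Qed.


Definition grp (ns : nat -> nat) : seq nat := flatten [seq nseq (ns g) g | g <- iota 1 K].

Lemma thr_grp ns : thresholds K x ns = map x (grp ns).
Proof.
rewrite /thresholds /grp map_flatten -map_comp; congr flatten.
by apply: eq_map => g /=; rewrite map_nseq.
Qed.

Lemma grp_range ns g : g \in grp ns -> (1 <= g <= K)%N.
Proof.
case/flattenP => s /mapP [g' hg' ->] /nseqP [-> _].
by move: hg'; rewrite mem_iota; lia.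
Qed.

Definition ee (g : nat) : nat := (\sum_(j < k) nat_of_bool (x j.+1 < x g)%R)%N.

Definition psi (cg : nat * nat) : R * bool :=
  if (cg.1 <= minn cg.2.-1 k)%N then ((cg.1)%:R, true)
  else if (cg.2 <= k)%N then ((ee cg.2)%:R, false) else (k.+1%:R, false).

Definition obsc ns (w : seq nat) : seq (R * bool) := map psi (zip w (grp ns)).

Definition ff (a : R * bool) : R * bool :=
  if a.1 <= z then ((cc a.1)%:R, a.2) else (k.+1%:R, false).

Lemma cc_xg g : (1 <= g <= k)%N -> cc (x g) = ee g.
Proof.
move=> hg; rewrite /cc big_ord_recr /= {2}/pp ltnn.
have -> : (z < x g) = false.
  apply/negbTE; rewrite -leNgt; apply: le_trans (xk_le_z _); last by lia.
  by apply: hmono; lia.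
rewrite addn0 /ee; apply: eq_bigr => i _; by rewrite /pp /= ltn_ord.
Qed.

Lemma ff_elem g d : (1 <= g <= K)%N ->
  ff (Num.min d (x g), d <= x g) = psi (cc d, g).
Proof.
move=> hg; rewrite /ff /psi /=.
case: (leqP g k) => gk.
  have -> : minn g.-1 k = g.-1 by lia.
  have ppg : pp g.-1 = x g by rewrite /pp ifT; [congr x; lia | lia].
  have xgz : x g <= z by apply: le_trans (xk_le_z _); [apply: hmono; lia | lia].
  rewrite cc_le ?ppg; last by lia.
  case: (leP d (x g)) => dg.
    by rewrite (le_trans dg xgz).
  by rewrite xgz cc_xg //; lia.
have -> : minn g.-1 k = k by lia.
rewrite cc_lek.
have zg : z < x g by apply: z_lt_x => //; lia.
case: (leP d z) => dz.
  by rewrite (min_idPl (le_trans dz (ltW zg))) dz (le_trans dz (ltW zg)).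
by rewrite leNgt lt_min dz zg /=.
Qed.

Lemma map_ff (G : seq nat) (D : seq R) : size D = size G ->
  (forall g, g \in G -> (1 <= g <= K)%N) ->
  map ff (sales_data (map x G) D) = map psi (zip (map cc D) G).
Proof.
elim: G D => [|g G IH] [|d D] //= [hs] hG.
rewrite /sales_data /= in IH *.
rewrite ff_elem; last by apply: hG; rewrite inE eqxx.
congr cons; apply: IH => // g' h; apply: hG; by rewrite inE h orbT.
Qed.

Definition Pc (a : R * bool) : Prop :=
  a.2 = false -> a.1 <= z -> exists g, (1 <= g <= k)%N /\ a.1 = x g.

Lemma Pc_elem g d : (1 <= g <= K)%N -> Pc (Num.min d (x g), d <= x g).
Proof.
move=> hg; rewrite /Pc /= => /negbT; rewrite -ltNge => gd.
rewrite (min_idPr (ltW gd)) => gz.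
exists g; split => //; case/andP: hg => -> gK /=.
rewrite leqNgt; apply/negP => kg.
by move: (lt_le_trans (z_lt_x kg gK) gz); rewrite ltxx.
Qed.

Lemma sales_Pc (G : seq nat) (D : seq R) :
  (forall g, g \in G -> (1 <= g <= K)%N) ->
  forall a, a \in sales_data (map x G) D -> Pc a.
Proof.
elim: G D => [|g G IH] [|d D] //= hG a.
rewrite /sales_data /= in IH *.
rewrite inE => /orP [/eqP ->|ha].
  by apply: Pc_elem; apply: hG; rewrite inE eqxx.
apply: (IH D) => // g' h; apply: hG; by rewrite inE h orbT.
Qed.

Lemma ff_cond a : ((ff a).1 <= k%:R) && (ff a).2 = (a.1 <= z) && a.2.
Proof.
rewrite /ff; case: ifP => az /=; first by rewrite ler_nat cc_lek az.
by rewrite andbF.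
Qed.

Lemma ff_mono a b : Pc a -> km_order a b -> km_order (ff a) (ff b).
Proof.
case: a => a1 a2; case: b => b1 b2; rewrite /Pc /ff /km_order /= => hP km.
have ab : a1 <= b1 by case/orP: km => [/ltW //|/andP[/eqP -> _]].
case: (leP a1 z) => az; case: (leP b1 z) => bz.
- case/orP: km => [lt_ab|/andP[/eqP e h]]; last by rewrite e eqxx h ltxx orbT.
  case: a2 hP => hP.
    have := cc_mono (ltW lt_ab); rewrite leq_eqVlt => /orP[/eqP ->|h].
      by rewrite eqxx implybT ltxx orbT.
    by rewrite ltr_nat h.
  have [g [hg ea]] := hP erefl az.
  set i := cc a1.
  have ik : (i <= k)%N by rewrite /i cc_lek.
  have ig : (i <= g.-1)%N.
    rewrite /i cc_le; last by lia.
    by rewrite /pp ifT; [rewrite ea prednK //; lia | lia].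
  have ppi : pp i <= a1.
    apply: le_trans (pp_mono ig) _; rewrite /pp ifT; last by lia.
    by rewrite ea prednK //; lia.
  have : ~~ (cc b1 <= i)%N.
    by rewrite cc_le // -ltNge (le_lt_trans ppi lt_ab).
  by rewrite -ltnNge ltr_nat => ->.
- by rewrite ltr_nat ltnS cc_lek az.
- by move: (le_lt_trans (le_trans ab bz) az); rewrite ltxx.
- by rewrite eqxx ltxx.
Qed.

Lemma event_eq (q : R) ns (D : seq R) : q <= 1 -> size D = size (grp ns) ->
  (KM_policy q (sales_data (thresholds K x ns) D) <= z) =
  (q <= 1 - KMprod (obsc ns (map cc D)) k%:R).
Proof.
move=> q1 hs; rewrite thr_grp KM_policy_le //; last exact: z_lt1; last exact: z_ge0.
have hG : forall g, g \in grp ns -> (1 <= g <= K)%N by move=> g; apply: grp_range.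
rewrite /obsc -map_ff // (KMprod_map (z := z)) //.
- move=> a b ha hb; apply: ff_mono; exact: sales_Pc ha.
- move=> a _; exact: ff_cond.
Qed.

End C.

Section F.
Variable R : realType.

Definition pv (k : nat) (v : 'rV[R]_k) (t : R) (j : nat) : R :=
  if (insub j : option 'I_k) is Some i then v ord0 i else if j == k then t else 1.

Definition piv (k : nat) (v : 'rV[R]_k) (t : R) (j : nat) : R :=
  if j is j'.+1 then pv v t j'.+1 - pv v t j' else pv v t 0.

Definition clamp01 (y : R) : R := Num.max 0 (Num.min 1 y).

Lemma clamp01_id y : 0 <= y <= 1 -> clamp01 y = y.
Proof. by case/andP=> y0 y1; rewrite /clamp01 (min_idPr y1) (max_idPr y0). Qed.

Lemma clamp01_bnd y : 0 <= clamp01 y <= 1.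
Proof.
rewrite /clamp01 le_max lexx /= ge_max ler01 /= ge_min lexx //.
Qed.

Lemma sum_piv k v t m : \sum_(j < m.+1) piv v t j = pv (k:=k) v t m.
Proof.
elim: m => [|m IH]; first by rewrite big_ord1.
by rewrite big_ord_recr IH /=; ring.
Qed.

Lemma pv_last k v t : pv (k:=k) v t k.+1 = 1.
Proof.
rewrite /pv insubN ?ltnn //; last by rewrite ltnNge leqnSn.
by rewrite eqn_leq ltnn.
Qed.

Lemma c1 k (i : 'I_k) : continuous (fun p : 'rV[R]_k * R => p.1 ord0 i).
Proof.
move=> p.
apply: (@continuous_comp _ _ _ fst (fun M : 'rV[R]_k => M ord0 i)).
  exact: cvg_fst.
exact: coord_continuous.
Qed.

Lemma c2 k : continuous (fun p : 'rV[R]_k * R => p.2).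
Proof. move=> p; exact: cvg_snd. Qed.

Lemma csum k (I : Type) (s : seq I) (F : I -> 'rV[R]_k * R -> R) :
  (forall j, continuous (F j)) -> continuous (fun p => \sum_(j <- s) F j p).
Proof.
move=> h; elim: s => [|j s IH].
  under eq_fun do rewrite big_nil. exact: cst_continuous.
under eq_fun do rewrite big_cons.
move=> p; apply: continuousD; [exact: h | exact: IH].
Qed.

Lemma cmul k (F G : 'rV[R]_k * R -> R) :
  continuous F -> continuous G -> continuous (fun p => F p * G p).
Proof. move=> hF hG p; exact: (continuousM (hF p) (hG p)). Qed.

Lemma cB k (F G : 'rV[R]_k * R -> R) :
  continuous F -> continuous G -> continuous (fun p => F p - G p).
Proof. move=> hF hG p; exact: (continuousB (hF p) (hG p)). Qed.

Lemma cclamp k (F : 'rV[R]_k * R -> R) :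
  continuous F -> continuous (fun p => clamp01 (F p)).
Proof.
move=> hF p; rewrite /clamp01.
apply: (@continuous_max _ _ (fun=> 0) (fun p => Num.min 1 (F p))).
  exact: cst_continuous.
apply: (@continuous_min _ _ (fun=> 1) F); [exact: cst_continuous | exact: hF].
Qed.

Lemma pv_cont k j : continuous (fun p : 'rV[R]_k * R => pv p.1 p.2 j).
Proof.
rewrite /pv; case: (insub j) => [i|]; first exact: c1.
case: (j == k); [exact: c2 | exact: cst_continuous].
Qed.

Lemma piv_cont k j : continuous (fun p : 'rV[R]_k * R => piv p.1 p.2 j).
Proof.
case: j => [|j] /=; first exact: pv_cont.
by apply: cB; apply: pv_cont.
Qed.

Lemma Ecell_cont k N m Phi :
  continuous (fun p : 'rV[R]_k * R => Ecell N (piv p.1 p.2) m Phi).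
Proof.
elim: m Phi => [|m IH] Phi /=; first exact: cst_continuous.
apply: csum => j; apply: cmul; [exact: piv_cont | exact: IH].
Qed.

End F.

Section E.
Variables (R : realType) (K k : nat) (x : nat -> R) (z : R).
Hypothesis hk : (k <= K)%N.
Hypothesis hx1 : 0 <= x 1%N.
Hypothesis hmono : forall i j : nat, (1 <= i)%N -> (i <= j)%N -> (j <= K)%N -> x i <= x j.
Hypothesis hxK : x K <= 1.
Hypothesis hz : xb K x k <= z < xb K x k.+1.
Variable mu : probability R R.

Local Notation c := (cc k x z).

Lemma le_set j : (j <= k)%N -> [set d | (c d <= j)%N] = [set` `]-oo, pp k x z j]].
Proof.
move=> jk; apply/seteqP; split => d /=; rewrite in_itv /= (cc_le hk hx1 hmono hxK hz) //.
Qed.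

Lemma le_setT j : (k < j)%N -> [set d | (c d <= j)%N] = setT.
Proof.
move=> kj; apply/seteqP; split => d //= _.
apply: (leq_trans _ kj); exact: (cc_lek1 hk hx1 hxK hz).
Qed.

Lemma meas_le j : measurable [set d | (c d <= j)%N].
Proof.
case: (leqP j k) => jk; first by rewrite le_set //; exact: measurable_itv.
by rewrite le_setT.
Qed.

Lemma cell_eq0 : [set d | c d = 0%N] = [set d | (c d <= 0)%N].
Proof. by apply/seteqP; split => d /=; [move=> -> | rewrite leqn0 => /eqP]. Qed.

Lemma cell_eqS j : [set d | c d = j.+1] = [set d | (c d <= j.+1)%N] `\` [set d | (c d <= j)%N].
Proof.
apply/seteqP; split => d /=.
  by move=> ->; split => //; rewrite ltnn.
by case=> h1 /negP; rewrite -ltnNge => h2; apply/eqP; rewrite eqn_leq h1 h2.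
Qed.

Lemma meas_cell j : measurable [set d | c d = j].
Proof.
case: j => [|j]; first by rewrite cell_eq0; exact: meas_le.
rewrite cell_eqS; apply: measurableD; exact: meas_le.
Qed.

Definition GG j : R := fine (mu [set d | (c d <= j)%N]).

Lemma picell0 : picell mu c 0 = GG 0.
Proof. by rewrite /picell /GG cell_eq0. Qed.

Lemma picellS j : picell mu c j.+1 = GG j.+1 - GG j.
Proof.
have mA := meas_le j.+1; have mB := meas_le j.
rewrite /picell /GG cell_eqS measureD //; last by rewrite ltey_eq fin_num_measure.
rewrite setIidr; last by move=> d /= h; apply: leqW.
by rewrite fineB // fin_num_measure.
Qed.

Lemma GG_val j : (j <= k.+1)%N ->
  GG j = pv (\row_(i < k) cdf_of mu (x i.+1)) (cdf_of mu z) j.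
Proof.
move=> jk; rewrite /pv; case: insubP => [i hi vi|hi].
  rewrite mxE /GG le_set; last by apply: ltnW.
  by rewrite /cdf_of /pp hi vi.
move: jk; rewrite leq_eqVlt => /orP[/eqP ->|].
  by rewrite /GG le_setT // eqn_leq ltnn probability_setT.
rewrite ltnS leq_eqVlt => /orP[/eqP ->|jk]; last by move: hi; rewrite jk.
by rewrite eqxx /GG le_set // /cdf_of /pp ltnn.
Qed.

Lemma picell_piv j : (j < k.+2)%N ->
  picell mu c j = piv (\row_(i < k) cdf_of mu (x i.+1)) (cdf_of mu z) j.
Proof.
case: j => [|j] hj /=; first by rewrite picell0 GG_val.
by rewrite picellS !GG_val //; lia.
Qed.

End E.

Unset Implicit Arguments.
Theorem lemma6 (R : realType) (cu co : R) (K : nat) (x : nat -> R)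
    (ns : nat -> nat) :
  0 < cu -> 0 < co -> (1 <= K)%N ->
  0 <= x 1%N ->
  (forall i j : nat, (1 <= i)%N -> (i <= j)%N -> (j <= K)%N -> x i <= x j) ->
  x K <= 1 ->
  let q := cu / (cu + co) in
  let thr := thresholds K x ns in
  forall k : nat, (k <= K)%N ->
  exists P : 'rV[R]_k -> R -> R,
    {within [set p : 'rV[R]_k * R |
               (forall j, 0 <= p.1 ord0 j <= 1) /\ 0 <= p.2 <= 1],
       continuous (fun p : 'rV[R]_k * R => P p.1 p.2)} /\
    (forall (v : 'rV[R]_k) (t : R), (forall j, 0 <= v ord0 j <= 1) ->
       0 <= t <= 1 -> 0 <= P v t <= 1) /\
    (forall mu : probability R R, mu [set` `[0, 1]] = 1%E ->
     forall z : R, xb K x k <= z < xb K x k.+1 ->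
       prod_prob mu (size thr)
         [set D : seq R | KM_policy q (sales_data thr D) <= z]
       = (P (\row_(j < k) cdf_of mu (x j.+1)) (cdf_of mu z))%:E).
Proof.
move=> hcu hco hK hx1 hmono hxK q thr k hk.
have q1 : q <= 1.
  rewrite /q ler_pdivrMr ?mul1r ?lerDl ?ltW //; exact: addr_gt0.
pose Phi (w : seq nat) : R :=
  if q <= 1 - KMprod (obsc K k x ns w) k%:R then 1 else 0.
have Phi01 : forall w, 0 <= Phi w <= 1.
  by move=> w; rewrite /Phi; case: ifP => _; rewrite ?lexx ?ler01.
have Phi0 : forall w, 0 <= Phi w by move=> w; case/andP: (Phi01 w).
exists (fun v t => clamp01 (Ecell k.+2 (piv v t) (size thr) Phi)).
split; [|split].
- apply: continuous_subspaceT; apply: cclamp; exact: Ecell_cont.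
- by move=> v t _ _; exact: clamp01_bnd.
move=> mu _ z hz.
have cN : forall d, (cc k x z d < k.+2)%N.
  by move=> d; rewrite ltnS; exact: (cc_lek1 hk hx1 hxK hz).
have cmeas := meas_cell hk hx1 hmono hxK hz.
rewrite /prod_prob (iint_cells mu cN cmeas (Phi := Phi)) //; last first.
  move=> s hs; rewrite /Phi -(event_eq hk hx1 hmono hxK hz) //; last first.
    by rewrite hs /thr thr_grp size_map.
  rewrite indicE; case: ifP => h.
    by rewrite mem_set.
  rewrite memNset //=; by move=> /negP; rewrite h.
congr EFin.
have hext : forall j, (j < k.+2)%N -> picell mu (cc k x z) j =
    piv (\row_(i < k) cdf_of mu (x i.+1)) (cdf_of mu z) j.
  move=> j hj; exact: (picell_piv hk hx1 hmono hxK hz).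
rewrite -(Ecell_ext _ _ hext) clamp01_id //; apply/andP; split.
  apply: Ecell_ge0 => // j; exact: picell_ge0.
apply: Ecell_le1 => //; first by move=> j; exact: picell_ge0.
rewrite (eq_bigr (fun j : 'I_k.+2 => piv (\row_(i < k) cdf_of mu (x i.+1)) (cdf_of mu z) j)).
  by rewrite sum_piv pv_last.
by move=> j _; apply: hext.
Qed.
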